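(* There is an absolute constant $c>0$ such that for every finite set $\Omega$ with $|\Omega|\ge2$ and every $0<\varepsilon<1/2$ there exist $n_0>0$ and a random variable $\Theta$ (whose distribution depends only on $\varepsilon,\Omega$) taking integer values with $0<\Theta<((2\ln|\Omega|)/\varepsilon)^c$ such that for all $n>n_0$ and all $\mu\in\mathcal P(\Omega^n)$ the following hold, where $I\subset[n]$ is a uniformly random subset of size $\Theta$ and, given $I$, $\sigma\in\Omega^I$ is drawn from $\mu_I$: (i) $\mathbb E[D_\square(\mu^{I,\sigma},\bar\mu^{I,\sigma})]<\varepsilon$; (ii) letting $\bar\mu^{I}=\mathbb E[\bar\mu^{I,\sigma}\mid I]=\sum_{\sigma\in\Omega^I}\mu_I(\sigma)\bar\mu^{I,\sigma}\in\mathcal P(\Omega^n)$, we have $\mathbb E[D_\square(\mu,\bar\mu^{I})]<\varepsilon$.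
   Context: $\mathcal P(\mathcal X)$ denotes the set of probability measures on a finite set $\mathcal X$; $[n]=\{1,\dots,n\}$. For $\mu\in\mathcal P(\Omega^n)$ and $I\subset[n]$, $\mu_I$ is the joint marginal distribution of the coordinates in $I$, and $\mu_i=\mu_{\{i\}}$. For $\sigma\in\Omega^I$ let $S^{I,\sigma}=\{\tau\in\Omega^n:\tau_i=\sigma_i\ \forall i\in I\}$ and let $\mu^{I,\sigma}=\mu[\cdot\,|S^{I,\sigma}]$ be the conditional distribution if $\mu(S^{I,\sigma})>0$, and the uniform distribution on $S^{I,\sigma}$ otherwise. Let $\bar\mu^{I,\sigma}=\bigotimes_{i=1}^n\mu^{I,\sigma}_i$ be the product measure with the same one-coordinate marginals as $\mu^{I,\sigma}$. For $\mu,\nu\in\mathcal P(\Omega^n)$ let $\Gamma(\mu,\nu)$ be the set of couplings, i.e. probability measures $\gamma$ on $\Omega^n\times\Omega^n$ whose first and second marginals are $\mu$ and $\nu$. The cut metric is $D_\square(\mu,\nu)=\frac1n\min_{\gamma\in\Gamma(\mu,\nu)}\max_{I\subset[n],\,B\subset\Omega^n\times\Omega^n,\,\omega\in\Omega}\Big|\sum_{i\in I}\sum_{(\sigma,\tau)\in B}\gamma(\sigma,\tau)\big(\mathbf 1\{\sigma_i=\omega\}-\mathbf 1\{\tau_i=\omega\}\big)\Big|$. *)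

(* Defs.v *)
From HB Require Import structures.
From Stdlib Require Import Reals ClassicalEpsilon.
From mathcomp Require Import all_boot.

Set Implicit Arguments.
Unset Strict Implicit.
Unset Printing Implicit Defensive.

Local Open Scope R_scope.

Lemma Rplus_assoc' : associative Rplus.
Proof. by move=> x y z; rewrite Rplus_assoc. Qed.
Lemma Rmult_assoc' : associative Rmult.
Proof. by move=> x y z; rewrite Rmult_assoc. Qed.
HB.instance Definition _ :=
  Monoid.isComLaw.Build R 0 Rplus Rplus_assoc' Rplus_comm Rplus_0_l.
HB.instance Definition _ :=
  Monoid.isComLaw.Build R 1 Rmult Rmult_assoc' Rmult_comm Rmult_1_l.

Definition config (Om : finType) (n : nat) := {ffun 'I_n -> Om}.

Definition ind (b : bool) : R := if b then 1 else 0.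

Definition is_prob (T : finType) (p : T -> R) : Prop :=
  (forall x, 0 <= p x) /\ \big[Rplus/0]_(x : T) p x = 1.

Section Defs.
Variables (Om : finType) (n : nat).
Local Notation cfg := (config Om n).

Definition cyl (I : {set 'I_n}) (s : {ffun {i : 'I_n | i \in I} -> Om})
  : pred cfg := fun tau => [forall i : {i : 'I_n | i \in I}, tau (val i) == s i].

Definition margI (mu : cfg -> R) (I : {set 'I_n})
  (s : {ffun {i : 'I_n | i \in I} -> Om}) : R :=
  \big[Rplus/0]_(tau : cfg | cyl s tau) mu tau.

(* mu^{I,sigma}: conditional measure, uniform on S^{I,sigma} if it is null *)
Definition condm (mu : cfg -> R) (I : {set 'I_n})
  (s : {ffun {i : 'I_n | i \in I} -> Om}) : cfg -> R :=
  fun tau =>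
    if Rlt_dec 0 (margI mu s) then ind (cyl s tau) * mu tau / margI mu s
    else ind (cyl s tau) / (\big[Rplus/0]_(t : cfg | cyl s t) 1).

Definition marg1 (mu : cfg -> R) (i : 'I_n) (w : Om) : R :=
  \big[Rplus/0]_(tau : cfg | tau i == w) mu tau.

Definition prodm (mu : cfg -> R) : cfg -> R :=
  fun tau => \big[Rmult/1]_(i : 'I_n) marg1 mu i (tau i).

Definition coupling (mu nu : cfg -> R) (g : cfg * cfg -> R) : Prop :=
  (forall p, 0 <= g p) /\
  (forall s, \big[Rplus/0]_(t : cfg) g (s, t) = mu s) /\
  (forall t, \big[Rplus/0]_(s : cfg) g (s, t) = nu t).

(* the inner maximum in the definition of the cut metric
   (all terms are >= 0, so folding Rmax from 0 gives the maximum) *)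
Definition cut_val (g : cfg * cfg -> R) : R :=
  \big[Rmax/0]_(I : {set 'I_n}) \big[Rmax/0]_(B : {set (cfg * cfg)%type})
   \big[Rmax/0]_(w : Om)
     Rabs (\big[Rplus/0]_(i in I) \big[Rplus/0]_(p : (cfg * cfg)%type | p \in B)
             (g p * (ind (fst p i == w) - ind (snd p i == w)))).

Definition is_inf (E : R -> Prop) (d : R) : Prop :=
  (forall x, E x -> d <= x) /\ (forall e, (forall x, E x -> e <= x) -> e <= d).

(* D_cut(mu,nu) = (1/n) * min over couplings (taken as the infimum) *)
Definition Dcut (mu nu : cfg -> R) : R :=
  epsilon (inhabits 0)
    (is_inf (fun x => exists g, coupling mu nu g /\ x = cut_val g)) / INR n.

Definition barI (mu : cfg -> R) (I : {set 'I_n}) : cfg -> R :=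
  fun tau => \big[Rplus/0]_(s : {ffun {i : 'I_n | i \in I} -> Om})
               (margI mu s * prodm (condm mu s) tau).

(* E over Theta (law theta, supported in [0,N)) and I uniform of size Theta *)
Definition avgI (N : nat) (theta : nat -> R) (F : {set 'I_n} -> R) : R :=
  \big[Rplus/0]_(t < N) (theta t *
    \big[Rplus/0]_(I : {set 'I_n} | #|I| == t) (/ INR 'C(n, t) * F I)).

Definition expect_i (N : nat) (theta : nat -> R) (mu : cfg -> R) : R :=
  avgI N theta (fun I =>
    \big[Rplus/0]_(s : {ffun {i : 'I_n | i \in I} -> Om})
      (margI mu s * Dcut (condm mu s) (prodm (condm mu s)))).

Definition expect_ii (N : nat) (theta : nat -> R) (mu : cfg -> R) : R :=
  avgI N theta (fun I => Dcut mu (barI mu I)).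

End Defs.

(* Main.v *)
Require Import Defs.
From HB Require Import structures.
From Stdlib Require Import Reals ClassicalEpsilon.
From mathcomp Require Import all_boot.
Local Open Scope R_scope.
From Stdlib Require Import Lra FunctionalExtensionality.
From Stdlib Require ZArith.
Import Defs.

Set Implicit Arguments.
Unset Strict Implicit.
Unset Printing Implicit Defensive.


Lemma sumR_le (I : Type) (r : seq I) (P : pred I) (F G : I -> R) :
  (forall i, P i -> F i <= G i) ->
  \big[Rplus/0]_(i <- r | P i) F i <= \big[Rplus/0]_(i <- r | P i) G i.
Proof.
move=> H; apply: (big_ind2 (fun x y => x <= y)) => //; first lra.
by move=> *; lra.
Qed.

Lemma sumR_ge0 (I : Type) (r : seq I) (P : pred I) (F : I -> R) :
  (forall i, P i -> 0 <= F i) -> 0 <= \big[Rplus/0]_(i <- r | P i) F i.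
Proof.
move=> H; apply: (big_ind (fun x => 0 <= x)) => //; first lra.
by move=> *; lra.
Qed.

Lemma sumR_mulr (I : Type) (r : seq I) (P : pred I) (F : I -> R) c :
  c * \big[Rplus/0]_(i <- r | P i) F i = \big[Rplus/0]_(i <- r | P i) (c * F i).
Proof.
apply: (big_endo (Rmult c)); last by rewrite Rmult_0_r.
by move=> x y; rewrite Rmult_plus_distr_l.
Qed.

Lemma sumR_mull (I : Type) (r : seq I) (P : pred I) (F : I -> R) c :
  \big[Rplus/0]_(i <- r | P i) F i * c = \big[Rplus/0]_(i <- r | P i) (F i * c).
Proof.
rewrite Rmult_comm sumR_mulr; apply: eq_bigr => i _; apply: Rmult_comm.
Qed.

Lemma sumR_opp (I : Type) (r : seq I) (P : pred I) (F : I -> R) :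
  - (\big[Rplus/0]_(i <- r | P i) F i) = \big[Rplus/0]_(i <- r | P i) (- F i).
Proof.
apply: (big_endo Ropp); last by rewrite Ropp_0.
by move=> x y; rewrite Ropp_plus_distr.
Qed.

Lemma sumR_sub (I : Type) (r : seq I) (P : pred I) (F G : I -> R) :
  \big[Rplus/0]_(i <- r | P i) (F i - G i) =
  \big[Rplus/0]_(i <- r | P i) F i - \big[Rplus/0]_(i <- r | P i) G i.
Proof. by rewrite /Rminus big_split /= sumR_opp. Qed.

Lemma sumR_abs (I : Type) (r : seq I) (P : pred I) (F : I -> R) :
  Rabs (\big[Rplus/0]_(i <- r | P i) F i) <= \big[Rplus/0]_(i <- r | P i) Rabs (F i).
Proof.
apply: (big_ind2 (fun x y => Rabs x <= y)).
- by rewrite Rabs_R0; lra.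
- move=> a1 a2 b1 b2 h1 h2; apply: Rle_trans (Rabs_triang _ _) _; lra.
- by move=> i _; lra.
Qed.

Lemma sumR_const (T : finType) (A : {pred T}) c :
  \big[Rplus/0]_(i in A) c = INR #|A| * c.
Proof.
rewrite big_const; elim: #|A| => [|k IH] /=; first by rewrite Rmult_0_l.
rewrite IH; case: k {IH} => [|k] /=; ring.
Qed.

Lemma sumR_sub_pred (T : finType) (P Q : pred T) (F : T -> R) :
  (forall i, P i -> Q i) -> (forall i, Q i -> 0 <= F i) ->
  \big[Rplus/0]_(i | P i) F i <= \big[Rplus/0]_(i | Q i) F i.
Proof.
move=> PQ F0; rewrite [X in X <= _]big_mkcond [X in _ <= X]big_mkcond.
apply: sumR_le => i _; case: ifP => Pi; first by rewrite (PQ _ Pi); lra.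
by case: ifP => Qi; [apply: F0|lra].
Qed.

Lemma quad_CS (A B C : R) : 0 <= B ->
  (forall l, 0 <= A - 2 * l * C + l ^ 2 * B) -> C ^ 2 <= A * B.
Proof.
move=> B0 H.
have A0 : 0 <= A by have := H 0; lra.
case: (Rle_lt_or_eq_dec _ _ B0) => [Bp|Bz].
- have := H (C / B).
  have -> : A - 2 * (C / B) * C + (C / B) ^ 2 * B = (A * B - C ^ 2) / B by field; apply: Rgt_not_eq.
  move=> h; have : 0 <= (A * B - C ^ 2) / B * B by apply: Rmult_le_pos; lra.
  have -> : (A * B - C ^ 2) / B * B = A * B - C ^ 2 by field; apply: Rgt_not_eq.
  lra.
- subst B; case: (Req_dec C 0) => [->|Cn]; first by nra.
  have := H ((A + 1) / (2 * C)).
  have -> : A - 2 * ((A + 1) / (2 * C)) * C + ((A + 1) / (2 * C)) ^ 2 * 0 = -1 by field.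
  lra.
Qed.

Lemma CS (I : Type) (r : seq I) (P : pred I) (w f g : I -> R) :
  (forall i, P i -> 0 <= w i) ->
  (\big[Rplus/0]_(i <- r | P i) (w i * f i * g i)) ^ 2 <=
  \big[Rplus/0]_(i <- r | P i) (w i * f i ^ 2) * \big[Rplus/0]_(i <- r | P i) (w i * g i ^ 2).
Proof.
move=> w0; apply: quad_CS.
  by apply: sumR_ge0 => i Pi; apply: Rmult_le_pos; [apply: w0|apply: pow2_ge_0].
move=> l.
have : 0 <= \big[Rplus/0]_(i <- r | P i) (w i * (f i - l * g i) ^ 2).
  by apply: sumR_ge0 => i Pi; apply: Rmult_le_pos; [apply: w0|apply: pow2_ge_0].
have -> : \big[Rplus/0]_(i <- r | P i) (w i * (f i - l * g i) ^ 2) =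
   \big[Rplus/0]_(i <- r | P i) (w i * f i ^ 2 + ((- 2 * l) * (w i * f i * g i)
       + l ^ 2 * (w i * g i ^ 2))).
  by apply: eq_bigr => i _; ring.
rewrite !big_split /= -!sumR_mulr; lra.
Qed.

Lemma jensen_sqrt (I : Type) (r : seq I) (P : pred I) (w x : I -> R) :
  (forall i, P i -> 0 <= w i) -> (forall i, P i -> 0 <= x i) ->
  \big[Rplus/0]_(i <- r | P i) w i <= 1 ->
  \big[Rplus/0]_(i <- r | P i) (w i * sqrt (x i)) <=
  sqrt (\big[Rplus/0]_(i <- r | P i) (w i * x i)).
Proof.
move=> w0 x0 w1.
set S := \big[Rplus/0]_(i <- r | P i) (w i * sqrt (x i)).
have S0 : 0 <= S by apply: sumR_ge0 => i Pi; apply: Rmult_le_pos;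
  [apply: w0|apply: sqrt_pos].
have X0 : 0 <= \big[Rplus/0]_(i <- r | P i) (w i * x i)
  by apply: sumR_ge0 => i Pi; apply: Rmult_le_pos; [apply: w0|apply: x0].
have H := @CS I r P w (fun _ => 1) (fun i => sqrt (x i)) w0.
have E1 : S = \big[Rplus/0]_(i <- r | P i) (w i * 1 * sqrt (x i))
  by apply: eq_bigr => i _; ring.
have E2 : \big[Rplus/0]_(i <- r | P i) (w i * 1 ^ 2) = \big[Rplus/0]_(i <- r | P i) w i
  by apply: eq_bigr => i _; ring.
have E3 : \big[Rplus/0]_(i <- r | P i) (w i * sqrt (x i) ^ 2) =
          \big[Rplus/0]_(i <- r | P i) (w i * x i).
  by apply: eq_bigr => i Pi; rewrite /= Rmult_1_r sqrt_sqrt //; apply: x0.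
rewrite -E1 E2 E3 in H.
have H2 : S ^ 2 <= \big[Rplus/0]_(i <- r | P i) (w i * x i).
  apply: Rle_trans H _.
  have W0 : 0 <= \big[Rplus/0]_(i <- r | P i) w i by apply: sumR_ge0.
  nra.
rewrite -(sqrt_pow2 S S0); apply: sqrt_le_1_alt; lra.
Qed.

Ltac Rring := match goal with |- ?a = ?b => change (@eq R a b); ring end.


Lemma Rmult_0_l' : left_zero 0 Rmult. Proof. move=> x; exact: Rmult_0_l. Qed.
Lemma Rmult_0_r' : right_zero 0 Rmult. Proof. move=> x; exact: Rmult_0_r. Qed.
HB.instance Definition _ := Monoid.isMulLaw.Build R 0 Rmult Rmult_0_l' Rmult_0_r'.
Lemma RDl : left_distributive Rmult Rplus. Proof. move=> x y z; ring. Qed.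
Lemma RDr : right_distributive Rmult Rplus. Proof. move=> x y z; ring. Qed.
HB.instance Definition _ := Monoid.isAddLaw.Build R Rmult Rplus RDl RDr.

Lemma ind01 b : 0 <= ind b <= 1.
Proof. rewrite /ind; case: b; lra. Qed.
Lemma ind_ge0 b : 0 <= ind b. Proof. by case: (ind01 b). Qed.
Lemma ind_le1 b : ind b <= 1. Proof. by case: (ind01 b). Qed.
Lemma ind_sq b : ind b * ind b = ind b.
Proof. rewrite /ind; case: b; ring. Qed.
Lemma ind_and a b : ind (a && b) = ind a * ind b.
Proof. rewrite /ind; case: a; case: b => /=; ring. Qed.

Lemma sum_ind_eq (T : finType) (a : T) :
  \big[Rplus/0]_(w : T) ind (a == w) = 1.
Proof.
rewrite (bigD1 a) //= big1 /ind ?eqxx; first ring.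
by move=> w /negbTE; rewrite eq_sym => ->.
Qed.

Lemma sum_ind_mul (T : finType) (a : T) (f : T -> R) :
  \big[Rplus/0]_(w : T) (f w * ind (w == a)) = f a.
Proof.
rewrite (bigD1 a) //= big1 /ind ?eqxx; first ring.
by move=> w /negbTE ->; ring.
Qed.

Section Cfg.
Variables (Om : finType) (n : nat).
Local Notation cfg := (config Om n).

Definition Ex (nu : cfg -> R) (f : cfg -> R) : R :=
  \big[Rplus/0]_(s : cfg) (nu s * f s).
Definition gi (i : 'I_n) (w : Om) (s : cfg) : R := ind (s i == w).
Definition xm (nu : cfg -> R) i w := Ex nu (gi i w).
Definition CovN (nu : cfg -> R) i j w :=
  Ex nu (fun s => gi i w s * gi j w s) - xm nu i w * xm nu j w.
Definition Xs (A : {set 'I_n}) (w : Om) (s : cfg) : R :=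
  \big[Rplus/0]_(i in A) gi i w s.

Lemma Ex_ext nu f h : (forall s, f s = h s) -> Ex nu f = Ex nu h.
Proof. by move=> E; apply: eq_bigr => s _; rewrite E. Qed.
Arguments Ex_ext {nu f} h.
Lemma Ex_add nu f h : Ex nu (fun s => f s + h s) = Ex nu f + Ex nu h.
Proof. rewrite /Ex -big_split; apply: eq_bigr => s _ /=; ring. Qed.
Lemma Ex_scal nu c f : Ex nu (fun s => c * f s) = c * Ex nu f.
Proof. rewrite /Ex sumR_mulr; apply: eq_bigr => s _ /=; ring. Qed.
Lemma Ex_const nu c : is_prob nu -> Ex nu (fun _ => c) = c.
Proof. by case=> _ h1; rewrite /Ex -sumR_mull h1 Rmult_1_l. Qed.
Lemma Ex_ge0 nu f : is_prob nu -> (forall s, 0 <= f s) -> 0 <= Ex nu f.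
Proof. case=> h0 _ f0; apply: sumR_ge0 => s _; apply: Rmult_le_pos; auto. Qed.
Lemma Ex_le nu f h : is_prob nu -> (forall s, f s <= h s) -> Ex nu f <= Ex nu h.
Proof.
case=> h0 _ fh; apply: sumR_le => s _; apply: Rmult_le_compat_l; auto.
Qed.

Lemma Ex_sum (J : finType) nu (A : {pred J}) (F : J -> cfg -> R) :
  Ex nu (fun s => \big[Rplus/0]_(i in A) F i s) = \big[Rplus/0]_(i in A) Ex nu (F i).
Proof.
rewrite /Ex (eq_bigr (fun s => \big[Rplus/0]_(i in A) (nu s * F i s))).
  by rewrite exchange_big.
by move=> s _; rewrite sumR_mulr.
Qed.

Lemma xm01 nu i w : is_prob nu -> 0 <= xm nu i w <= 1.
Proof.
move=> P; split; first by apply: Ex_ge0 => // s; apply: ind_ge0.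
rewrite -(Ex_const 1 P); apply: Ex_le => // s; apply: ind_le1.
Qed.

Lemma var_expand nu A w : is_prob nu ->
  Ex nu (fun s => (Xs A w s - \big[Rplus/0]_(i in A) xm nu i w) ^ 2) =
  \big[Rplus/0]_(i in A) \big[Rplus/0]_(j in A) CovN nu i j w.
Proof.
move=> P.
rewrite (Ex_ext (fun s => \big[Rplus/0]_(i in A) \big[Rplus/0]_(j in A)
   ((gi i w s - xm nu i w) * (gi j w s - xm nu j w)))); last first.
  move=> s; rewrite /Xs -sumR_sub /= Rmult_1_r sumR_mull.
  by apply: eq_bigr => i _; rewrite sumR_mulr.
rewrite Ex_sum; apply: eq_bigr => i _; rewrite Ex_sum; apply: eq_bigr => j _.
rewrite (Ex_ext (fun s => gi i w s * gi j w s + ((- xm nu j w) * gi i w s +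
   ((- xm nu i w) * gi j w s + (xm nu i w * xm nu j w))))); last by move=> s; ring.
rewrite !Ex_add !Ex_scal Ex_const // /CovN /xm; ring.
Qed.

Lemma absdev_le nu F : is_prob nu ->
  Ex nu (fun s => Rabs (F s)) <= sqrt (Ex nu (fun s => F s ^ 2)).
Proof.
case=> h0 h1; rewrite /Ex.
rewrite (eq_bigr (fun s => nu s * sqrt (F s ^ 2))); last first.
  by move=> s _; rewrite /= Rmult_1_r sqrt_Rsqr_abs.
apply: jensen_sqrt => //; first by move=> s _; apply: pow2_ge_0.
by rewrite h1; lra.
Qed.

Lemma pair_bound nu pi F : is_prob nu -> is_prob pi -> Ex nu F = Ex pi F ->
  \big[Rplus/0]_(s : cfg) \big[Rplus/0]_(t : cfg) (nu s * pi t * Rabs (F s - F t))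
  <= Ex nu (fun s => Rabs (F s - Ex nu F)) + Ex pi (fun s => Rabs (F s - Ex nu F)).
Proof.
move=> Pn Pp E; set m := Ex nu F.
apply: Rle_trans (_ : \big[Rplus/0]_(s : cfg) \big[Rplus/0]_(t : cfg)
   (nu s * pi t * (Rabs (F s - m) + Rabs (F t - m))) <= _).
  apply: sumR_le => s _; apply: sumR_le => t _; apply: Rmult_le_compat_l.
    by apply: Rmult_le_pos; [case: Pn|case: Pp].
  have -> : F s - F t = (F s - m) + - (F t - m) by ring.
  by apply: Rle_trans (Rabs_triang _ _) _; rewrite Rabs_Ropp; lra.
apply: Req_le.
rewrite (eq_bigr (fun s => nu s * Rabs (F s - m) * \big[Rplus/0]_(t : cfg) pi t +
   nu s * \big[Rplus/0]_(t : cfg) (pi t * Rabs (F t - m)))); last first.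
  move=> s _; rewrite sumR_mulr sumR_mulr -big_split; apply: eq_bigr => t _ /=; ring.
rewrite big_split /=; case: Pp => _ ->.
case: Pn => _ h1; rewrite /Ex -[X in _ + X = _]sumR_mull h1 Rmult_1_l.
congr (_ + _); by apply: eq_bigr => s _; ring.
Qed.

End Cfg.
Arguments Ex_ext {Om n nu f} h.


Section Prod.
Variables (Om : finType) (n : nat).
Local Notation cfg := (config Om n).

Lemma prod_sel (f : 'I_n -> Om -> R) (K : {set 'I_n}) w :
  (forall i, \big[Rplus/0]_(v : Om) f i v = 1) ->
  \big[Rplus/0]_(t : cfg) ((\big[Rmult/1]_i f i (t i)) *
      \big[Rmult/1]_(i in K) ind (t i == w)) = \big[Rmult/1]_(i in K) f i w.
Proof.
move=> f1.
pose c i v := if i \in K then ind (v == w) else 1.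
have E := bigA_distr_bigA (fun i v => f i v * c i v).
rewrite [RHS](_ : _ = \big[Rmult/1]_i \big[Rplus/0]_v (f i v * c i v)); last first.
  rewrite big_mkcond; apply: eq_bigr => i _; rewrite /c; case: (i \in K).
    by rewrite sum_ind_mul.
  by rewrite -[LHS](f1 i); apply: eq_bigr => v _; ring.
rewrite E; apply: eq_bigr => t _; rewrite big_split /=; congr (_ * _).
by rewrite [RHS]big_mkcond /c [LHS]big_mkcond.
Qed.

Lemma marg1_xm (nu : cfg -> R) i w : marg1 nu i w = xm nu i w.
Proof.
rewrite /marg1 /xm /Ex /gi big_mkcond; apply: eq_bigr => t _.
by rewrite /ind; case: (t i == w); ring.
Qed.

Lemma sum_marg1 (nu : cfg -> R) i : is_prob nu ->
  \big[Rplus/0]_(v : Om) marg1 nu i v = 1.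
Proof.
move=> P; rewrite (eq_bigr (fun v => xm nu i v)); last by move=> *; rewrite marg1_xm.
rewrite /xm -Ex_sum.
rewrite (Ex_ext (fun _ => 1)); first exact: Ex_const.
by move=> s; rewrite /gi sum_ind_eq.
Qed.

Lemma prodm_ge0 (nu : cfg -> R) t : (forall s, 0 <= nu s) -> 0 <= prodm nu t.
Proof.
move=> h; apply: (big_ind (fun x => 0 <= x)); first lra.
  by move=> *; apply: Rmult_le_pos.
by move=> i _; rewrite marg1_xm; apply: sumR_ge0 => s _; apply: Rmult_le_pos;
  [apply: h| apply: ind_ge0].
Qed.

Lemma prodm_prob (nu : cfg -> R) : is_prob nu -> is_prob (prodm nu).
Proof.
move=> P; split; first by move=> t; apply: prodm_ge0; case: P.
rewrite /prodm -(bigA_distr_bigA (fun i v => marg1 nu i v)).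
by rewrite big1 // => i _; apply: sum_marg1.
Qed.

Lemma xm_prodm (nu : cfg -> R) i w : is_prob nu -> xm (prodm nu) i w = xm nu i w.
Proof.
move=> P; rewrite -[RHS]marg1_xm /xm /Ex.
have := prod_sel [set i] w (sum_marg1 (nu:=nu)^~ P); rewrite big_set1 => <-.
by apply: eq_bigr => t _; rewrite big_set1.
Qed.

Lemma pair_prodm (nu : cfg -> R) i j w : is_prob nu -> i != j ->
  Ex (prodm nu) (fun s => gi i w s * gi j w s) = xm nu i w * xm nu j w.
Proof.
move=> P ij; rewrite -!marg1_xm /Ex.
have nij : i \notin [set j] by rewrite in_set1.
have := prod_sel [set i; j] w (sum_marg1 (nu:=nu)^~ P).
rewrite big_setU1 //= big_set1 => <-.
by apply: eq_bigr => t _; rewrite big_setU1 //= big_set1.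
Qed.

Lemma var_prod (nu : cfg -> R) (A : {set 'I_n}) w : is_prob nu ->
  \big[Rplus/0]_(i in A) \big[Rplus/0]_(j in A) CovN (prodm nu) i j w <= INR n.
Proof.
move=> P.
apply: Rle_trans (_ : \big[Rplus/0]_(i in A) 1 <= _); last first.
  rewrite sumR_const Rmult_1_r; apply: le_INR; apply/leP.
  by rewrite -[X in (_ <= X)%N]card_ord; apply: max_card.
apply: sumR_le => i iA; rewrite (bigD1 i) //= big1; last first.
  move=> j /andP [_ ji]; rewrite /CovN pair_prodm // ?xm_prodm //; first ring.
  by rewrite eq_sym.
rewrite /CovN (Ex_ext (gi i w)); last by move=> s; rewrite /gi ind_sq.
have := xm01 i w (prodm_prob P); rewrite /xm => h; nra.
Qed.

End Prod.


Lemma single_le_sum (J : finType) (F : J -> R) a :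
  (forall x, 0 <= F x) -> F a <= \big[Rplus/0]_x F x.
Proof.
move=> F0; rewrite (bigD1 a) //=.
have : 0 <= \big[Rplus/0]_(x | x != a) F x by apply: sumR_ge0.
lra.
Qed.

Lemma sq_sum_le (J : finType) (a : J -> R) :
  (\big[Rplus/0]_j a j) ^ 2 <= INR #|J| * \big[Rplus/0]_j a j ^ 2.
Proof.
have := @CS J (index_enum J) predT (fun _ => 1) (fun _ => 1) a (fun _ _ => Rle_0_1).
have -> : \big[Rplus/0]_(j <- index_enum J | predT j) (1 * 1 * a j) = \big[Rplus/0]_j a j
  by apply: eq_bigr => j _; ring.
have -> : \big[Rplus/0]_(j <- index_enum J | predT j) (1 * 1 ^ 2) = INR #|J|
  by rewrite -[RHS]Rmult_1_r -sumR_const; apply: eq_bigr => j _; ring.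
have -> : \big[Rplus/0]_(j <- index_enum J | predT j) (1 * a j ^ 2) =
          \big[Rplus/0]_j a j ^ 2 by apply: eq_bigr => j _; ring.
done.
Qed.

Lemma bigmax_le (J : finType) (F : J -> R) M :
  0 <= M -> (forall x, F x <= M) -> \big[Rmax/0]_x F x <= M.
Proof.
move=> M0 H; apply: (big_ind (fun x => x <= M)) => //.
by move=> x y hx hy; apply: Rmax_lub.
Qed.

Lemma bigmax_ge0 (J : finType) (F : J -> R) : 0 <= \big[Rmax/0]_x F x.
Proof.
apply: (big_rec (fun x => 0 <= x)); first lra.
by move=> i x _ hx; apply: Rle_trans hx (Rmax_r _ _).
Qed.

Section Cut.
Variables (Om : finType) (n : nat).
Local Notation cfg := (config Om n).

Lemma cut_val_ge0 (g : cfg * cfg -> R) : 0 <= cut_val g.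
Proof. exact: bigmax_ge0. Qed.

Lemma cut_val_le (g : cfg * cfg -> R) M : 0 <= M -> (forall p, 0 <= g p) ->
  (forall A w, \big[Rplus/0]_(p : cfg * cfg)
     (g p * Rabs (Xs A w p.1 - Xs A w p.2)) <= M) -> cut_val g <= M.
Proof.
move=> M0 g0 H; apply: bigmax_le => // A; apply: bigmax_le => // B.
apply: bigmax_le => // w.
rewrite exchange_big /=.
rewrite (eq_bigr (fun p => g p * (Xs A w p.1 - Xs A w p.2))); last first.
  by move=> p _; rewrite /Xs -sumR_sub sumR_mulr.
apply: Rle_trans; first apply: sumR_abs.
apply: Rle_trans (H A w).
rewrite (eq_bigr (fun p => g p * Rabs (Xs A w p.1 - Xs A w p.2))); last first.
  by move=> p _; rewrite Rabs_mult (Rabs_pos_eq _ (g0 p)).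
apply: sumR_sub_pred => // p _.
by apply: Rmult_le_pos => //; apply: Rabs_pos.
Qed.

Lemma inf_exists (E : R -> Prop) x0 : E x0 -> (forall x, E x -> 0 <= x) ->
  exists d, is_inf E d.
Proof.
move=> Ex0 E0.
have hb : bound (fun y => E (- y)).
  by exists 0 => y Ey; have := E0 _ Ey; lra.
have hn : exists y, E (- y) by exists (- x0); rewrite Ropp_involutive.
have [m [ub lub]] := completeness (fun y => E (- y)) hb hn.
exists (- m); split.
- move=> x Ex; have : - x <= m by apply: ub; rewrite Ropp_involutive.
  lra.
- move=> e He; have : m <= - e.
    by apply: lub => y Ey; have := He _ Ey; lra.
  lra.
Qed.

Lemma Dcut_le (mu nu : cfg -> R) g : (0 < n)%N -> coupling mu nu g ->
  Dcut mu nu <= cut_val g / INR n.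
Proof.
move=> n0 cg; rewrite /Dcut /Rdiv; apply: Rmult_le_compat_r.
  by apply: Rlt_le; apply: Rinv_0_lt_compat; apply: lt_0_INR; apply/ltP.
set E := fun x => _.
have [d Hd] : exists d, is_inf E d.
  apply: (@inf_exists E (cut_val g)); first by exists g.
  by move=> x [g' [_ ->]]; apply: cut_val_ge0.
have := epsilon_spec (inhabits 0) (is_inf E) (ex_intro _ d Hd).
by case=> h _; apply: h; exists g.
Qed.

End Cut.


Section Single.
Variables (Om : finType) (n : nat).
Local Notation cfg := (config Om n).

Definition SC (nu : cfg -> R) : R :=
  \big[Rplus/0]_(j : 'I_n) \big[Rplus/0]_(i : 'I_n) \big[Rplus/0]_(w : Om)
     CovN nu i j w ^ 2.
Definition Qm (nu : cfg -> R) : R := sqrt (sqrt (SC nu) / INR n).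

Lemma SC_ge0 nu : 0 <= SC nu.
Proof. by apply: sumR_ge0 => j _; apply: sumR_ge0 => i _; apply: sumR_ge0 => w _;
  apply: pow2_ge_0. Qed.

Lemma cov_sum_le nu (A : {set 'I_n}) w :
  \big[Rplus/0]_(i in A) \big[Rplus/0]_(j in A) CovN nu i j w <= INR n * sqrt (SC nu).
Proof.
set V := \big[Rplus/0]_(i : 'I_n) \big[Rplus/0]_(j : 'I_n) Rabs (CovN nu i j w).
set S := \big[Rplus/0]_(i : 'I_n) \big[Rplus/0]_(j : 'I_n) CovN nu i j w ^ 2.
have h1 : \big[Rplus/0]_(i in A) \big[Rplus/0]_(j in A) CovN nu i j w <= V.
  apply: Rle_trans (_ : \big[Rplus/0]_(i in A) \big[Rplus/0]_(j in A)
      Rabs (CovN nu i j w) <= _).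
    by apply: sumR_le => i _; apply: sumR_le => j _; apply: Rle_abs.
  apply: Rle_trans (_ : \big[Rplus/0]_(i in A) \big[Rplus/0]_(j : 'I_n)
      Rabs (CovN nu i j w) <= _).
    apply: sumR_le => i _; apply: sumR_sub_pred => // j _; apply: Rabs_pos.
  apply: sumR_sub_pred => // i _; apply: sumR_ge0 => j _; apply: Rabs_pos.
have V0 : 0 <= V by apply: sumR_ge0 => i _; apply: sumR_ge0 => j _; apply: Rabs_pos.
have S0 : 0 <= S by apply: sumR_ge0 => i _; apply: sumR_ge0 => j _; apply: pow2_ge_0.
have h2 : V ^ 2 <= INR n ^ 2 * S.
  apply: Rle_trans (sq_sum_le _) _; rewrite card_ord /S.
  rewrite [X in _ <= X](_ : _ = INR n * \big[Rplus/0]_(i : 'I_n) (INR n *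
      \big[Rplus/0]_(j : 'I_n) CovN nu i j w ^ 2)); last first.
    by rewrite -sumR_mulr -Rmult_assoc /= Rmult_1_r.
  have n0 : 0 <= INR n by apply: pos_INR.
  apply: Rmult_le_compat_l => //; apply: sumR_le => i _.
  apply: Rle_trans (sq_sum_le _) _; rewrite card_ord; apply: Rmult_le_compat_l => //.
  by apply: Req_le; apply: eq_bigr => j _; rewrite pow2_abs.
have h3 : S <= SC nu.
  rewrite /S /SC exchange_big /=; apply: sumR_le => j _; apply: sumR_le => i _.
  have := @single_le_sum Om (fun w0 => CovN nu i j w0 * (CovN nu i j w0 * 1)) w.
  by apply => x; nra.
apply: Rle_trans h1 _.
have n0 : 0 <= INR n by apply: pos_INR.
apply: Rle_trans (_ : sqrt (INR n ^ 2 * S) <= _).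
  by rewrite -(sqrt_pow2 V V0); apply: sqrt_le_1_alt.
rewrite sqrt_mult_alt; last by apply: pow2_ge_0.
rewrite sqrt_pow2 //; apply: Rmult_le_compat_l => //; apply: sqrt_le_1_alt => //.
Qed.

Lemma sqrt_nQ y : (0 < n)%N -> 0 <= y -> sqrt (INR n * y) = INR n * sqrt (y / INR n).
Proof.
move=> n0 y0; have np : 0 < INR n by apply: lt_0_INR; apply/ltP.
rewrite -[X in X * sqrt _](sqrt_square (INR n)); last lra.
rewrite -sqrt_mult_alt; last by apply: Rmult_le_pos; lra.
congr sqrt; field; lra.
Qed.

Lemma prod_coupling_bound (nu : cfg -> R) A w : (0 < n)%N -> is_prob nu ->
  \big[Rplus/0]_(p : cfg * cfg) (nu p.1 * prodm nu p.2 * Rabs (Xs A w p.1 - Xs A w p.2))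
  <= INR n * Qm nu + sqrt (INR n).
Proof.
move=> n0 Pn; have Pp := prodm_prob Pn.
rewrite -(pair_bigA _ (fun s t => nu s * prodm nu t * Rabs (Xs A w s - Xs A w t))).
have Em : Ex nu (Xs A w) = Ex (prodm nu) (Xs A w).
  rewrite /Xs !Ex_sum; apply: eq_bigr => i _; rewrite -/(xm _ i w).
  by rewrite -/(xm (prodm nu) i w) xm_prodm.
apply: Rle_trans (pair_bound Pn Pp Em) _.
have mE : Ex nu (Xs A w) = \big[Rplus/0]_(i in A) xm nu i w by rewrite /Xs Ex_sum.
have mE' : Ex nu (Xs A w) = \big[Rplus/0]_(i in A) xm (prodm nu) i w.
  by rewrite mE; apply: eq_bigr => i _; rewrite xm_prodm.
apply: Rplus_le_compat.
- apply: Rle_trans (absdev_le _ Pn) _.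
  rewrite [X in Ex _ (fun s => (Xs A w s - X) ^ 2)]mE var_expand //.
  rewrite /Qm -sqrt_nQ //; last by apply: sqrt_pos.
  by apply: sqrt_le_1_alt; apply: cov_sum_le.
- apply: Rle_trans (absdev_le _ Pp) _.
  rewrite [X in Ex _ (fun s => (Xs A w s - X) ^ 2)]mE' var_expand //.
  by apply: sqrt_le_1_alt; apply: var_prod.
Qed.

End Single.


Lemma cov_var (T : finType) (nu : T -> R) (h F : T -> R) :
  is_prob nu -> (forall s, 0 <= h s <= 1) ->
  (\big[Rplus/0]_s (nu s * (h s * F s)) - \big[Rplus/0]_s (nu s * F s) *
     \big[Rplus/0]_s (nu s * h s)) ^ 2 <=
  \big[Rplus/0]_s (nu s * F s ^ 2) - (\big[Rplus/0]_s (nu s * F s)) ^ 2.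
Proof.
case=> nu0 nu1 h01.
set m := \big[Rplus/0]_s (nu s * F s).
have E1 : \big[Rplus/0]_s (nu s * (h s * F s)) - m * \big[Rplus/0]_s (nu s * h s) =
          \big[Rplus/0]_s (nu s * h s * (F s - m)).
  rewrite sumR_mulr -sumR_sub; apply: eq_bigr => s _; ring.
have E2 : \big[Rplus/0]_s (nu s * F s ^ 2) - m ^ 2 =
          \big[Rplus/0]_s (nu s * (F s - m) ^ 2).
  have -> : \big[Rplus/0]_s (nu s * (F s - m) ^ 2) = \big[Rplus/0]_s
     (nu s * F s ^ 2 + ((- 2 * m) * (nu s * F s) + m ^ 2 * nu s))
    by apply: eq_bigr => s _; ring.
  rewrite !big_split /= -!sumR_mulr nu1 -/m; ring.
rewrite E1 E2.
have := @CS T (index_enum T) predT nu h (fun s => F s - m) (fun s _ => nu0 s).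
have H1 : \big[Rplus/0]_(s <- index_enum T | predT s) (nu s * h s ^ 2) <= 1.
  rewrite -nu1; apply: sumR_le => s _; have [h0 h1] := h01 s.
  rewrite -[X in _ <= X]Rmult_1_r; apply: Rmult_le_compat_l => //=; nra.
have H2 : 0 <= \big[Rplus/0]_(s <- index_enum T | predT s) (nu s * (F s - m) ^ 2).
  by apply: sumR_ge0 => s _; apply: Rmult_le_pos => //; apply: pow2_ge_0.
have H0 : 0 <= \big[Rplus/0]_(s <- index_enum T | predT s) (nu s * h s ^ 2).
  by apply: sumR_ge0 => s _; apply: Rmult_le_pos => //; apply: pow2_ge_0.
move=> H; apply: Rle_trans H _.
rewrite -[X in _ <= X]Rmult_1_l; apply: Rmult_le_compat_r => //.
Qed.

Section Cond.
Variables (Om : finType) (n : nat) (mu : config Om n -> R).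
Local Notation cfg := (config Om n).

Definition agree (I : {set 'I_n}) (s t : cfg) : bool := [forall i in I, s i == t i].
Definition Zc I (t : cfg) : R := \big[Rplus/0]_(s : cfg) (mu s * ind (agree I s t)).
Definition cond I (t : cfg) : cfg -> R := fun s => mu s * ind (agree I s t) / Zc I t.

Lemma agree_refl I s : agree I s s.
Proof. by apply/forall_inP => i _. Qed.
Lemma agree_sym I s t : agree I s t = agree I t s.
Proof.
by apply/forall_inP/forall_inP => h i iI; rewrite eq_sym; apply: h.
Qed.
Lemma agree_trans I s t u : agree I s t -> agree I t u -> agree I s u.
Proof.
move=> /forall_inP h1 /forall_inP h2; apply/forall_inP => i iI.
by rewrite (eqP (h1 i iI)) h2.
Qed.
Lemma agree_sub (I J : {set 'I_n}) s t : I \subset J -> agree J s t -> agree I s t.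
Proof.
move=> /subsetP IJ /forall_inP h; apply/forall_inP => i iI; exact: h (IJ _ iI).
Qed.
Lemma agree_eq I s t t' : agree I t t' -> agree I s t = agree I s t'.
Proof.
move=> h; apply/idP/idP => h'; first exact: agree_trans h' h.
by apply: agree_trans h' _; rewrite agree_sym.
Qed.

Lemma Zc_eq I t t' : agree I t t' -> Zc I t = Zc I t'.
Proof. by move=> h; apply: eq_bigr => s _; rewrite (agree_eq s h). Qed.

Lemma Zc_pos I t : is_prob mu -> 0 < mu t -> 0 < Zc I t.
Proof.
case=> m0 _ mt; apply: Rlt_le_trans (_ : mu t * ind (agree I t t) <= _).
  by rewrite agree_refl /ind Rmult_1_r.
exact: (@single_le_sum _ (fun s => mu s * ind (agree I s t)) t
  (fun s => Rmult_le_pos _ _ (m0 s) (ind_ge0 _))).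
Qed.

Lemma cond_prob I t : is_prob mu -> 0 < mu t -> is_prob (cond I t).
Proof.
move=> Pm mt; have Zp := Zc_pos I Pm mt; case: (Pm) => m0 _; split.
  move=> s; rewrite /cond; apply: Rmult_le_pos; last by apply: Rlt_le;
    apply: Rinv_0_lt_compat.
  by apply: Rmult_le_pos => //; apply: ind_ge0.
rewrite /cond -sumR_mull -/(Zc I t); field; lra.
Qed.

Lemma gtower J (c : cfg -> R) F : is_prob mu ->
  (forall s t, agree J s t -> c s = c t) ->
  \big[Rplus/0]_(t : cfg) (c t * mu t * Ex (cond J t) F) =
  \big[Rplus/0]_(t : cfg) (c t * mu t * F t).
Proof.
move=> Pm cJ; case: (Pm) => m0 _.
rewrite (eq_bigr (fun t => \big[Rplus/0]_(s : cfg)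
   (c t * mu t * (mu s * ind (agree J s t) / Zc J t * F s)))); last first.
  by move=> t _; rewrite /Ex sumR_mulr.
rewrite exchange_big /=; apply: eq_bigr => s _.
rewrite (eq_bigr (fun t => (c s * mu s * F s / Zc J s) * (mu t * ind (agree J t s))));
  last first.
  move=> t _; rewrite (agree_sym J t s).
  case As: (agree J s t); last by rewrite /ind /Rdiv; ring.
  rewrite (cJ _ _ As) (Zc_eq As) /ind /Rdiv; ring.
rewrite -sumR_mulr -/(Zc J s).
case: (Rle_lt_or_eq_dec _ _ (m0 s)) => [ms|<-]; last by rewrite /Rdiv; ring.
have := Zc_pos J Pm ms; move=> Zp; field; lra.
Qed.

Lemma tower0 J F : is_prob mu ->
  \big[Rplus/0]_(t : cfg) (mu t * Ex (cond J t) F) = Ex mu F.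
Proof.
move=> Pm; have := @gtower J (fun _ => 1) F Pm (fun _ _ _ => erefl).
rewrite (eq_bigr (fun t => mu t * Ex (cond J t) F)); last by move=> *; ring.
by move=> ->; apply: eq_bigr => *; ring.
Qed.

Lemma tower (I J : {set 'I_n}) t0 F : is_prob mu -> I \subset J ->
  Ex (cond I t0) (fun t => Ex (cond J t) F) = Ex (cond I t0) F.
Proof.
move=> Pm IJ.
have cJ : forall s t, agree J s t ->
    ind (agree I s t0) / Zc I t0 = ind (agree I t t0) / Zc I t0.
  by move=> s t hst; rewrite (agree_sym I s t0) (agree_sym I t t0) (agree_eq t0 (agree_sub IJ hst)).
have H := @gtower J (fun t => ind (agree I t t0) / Zc I t0) F Pm cJ.
rewrite /Ex /cond in H *.
transitivity (\big[Rplus/0]_t (ind (agree I t t0) / Zc I t0 * mu t *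
   \big[Rplus/0]_s (mu s * ind (agree J s t) / Zc J t * F s))).
  by apply: eq_bigr => t _; congr (_ * _); rewrite /Rdiv; Rring.
rewrite H; apply: eq_bigr => t _; rewrite /Rdiv; ring.
Qed.


Definition rr I t i w := xm (cond I t) i w.
Definition Phi I := \big[Rplus/0]_(t : cfg) (mu t *
   \big[Rplus/0]_(i : 'I_n) \big[Rplus/0]_(w : Om) rr I t i w ^ 2).
Definition WW I := \big[Rplus/0]_(t : cfg) (mu t * SC (cond I t)).

Lemma meas_mult J s (h : cfg -> R) G :
  (forall s', agree J s' s -> h s' = h s) ->
  Ex (cond J s) (fun s' => h s' * G s') = h s * Ex (cond J s) G.
Proof.
move=> hJ; rewrite -Ex_scal; apply: eq_bigr => s' _.
case As: (agree J s' s); first by rewrite (hJ _ As); Rring.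
by rewrite /cond As /ind /Rdiv; Rring.
Qed.

Lemma cov_step I j i w t : is_prob mu -> 0 < mu t ->
  CovN (cond I t) i j w ^ 2 <=
  Ex (cond I t) (fun s => rr (j |: I) s i w ^ 2) - rr I t i w ^ 2.
Proof.
move=> Pm mt; set J := j |: I.
have IJ : I \subset J by apply: subsetUr.
have Pn := cond_prob I Pm mt.
have e1 : Ex (cond I t) (fun s => gi i w s * gi j w s) =
          Ex (cond I t) (fun s => gi j w s * rr J s i w).
  rewrite -(tower t _ Pm IJ); apply: Ex_ext => s.
  rewrite (Ex_ext (fun s' => gi j w s' * gi i w s')); last by move=> s'; Rring.
  rewrite meas_mult // => s' /forall_inP h.
  by rewrite /gi (eqP (h j (setU11 _ _))).
have e2 : rr I t i w = Ex (cond I t) (fun s => rr J s i w).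
  by rewrite /rr /xm -(tower t _ Pm IJ).
rewrite /CovN e1 -/(rr I t i w) e2.
have := @cov_var _ (cond I t) (gi j w) (fun s => rr J s i w) Pn.
rewrite /Ex /xm; apply => s; split; [apply: ind_ge0 | apply: ind_le1].
Qed.

Lemma pot_step I j : is_prob mu ->
  \big[Rplus/0]_(t : cfg) (mu t * \big[Rplus/0]_(i : 'I_n) \big[Rplus/0]_(w : Om)
     CovN (cond I t) i j w ^ 2) <= Phi (j |: I) - Phi I.
Proof.
move=> Pm; case: (Pm) => m0 _.
apply: Rle_trans (_ : \big[Rplus/0]_(t : cfg) (mu t * \big[Rplus/0]_(i : 'I_n)
   \big[Rplus/0]_(w : Om) (Ex (cond I t) (fun s => rr (j |: I) s i w ^ 2) - rr I t i w ^ 2))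
   <= _).
  apply: sumR_le => t _.
  case: (Rle_lt_or_eq_dec _ _ (m0 t)) => [mt|<-]; last by rewrite !Rmult_0_l; lra.
  apply: Rmult_le_compat_l; first lra.
  by apply: sumR_le => i _; apply: sumR_le => w _; apply: cov_step.
apply: Req_le.
rewrite (_ : Phi (j |: I) = Ex mu (fun s => \big[Rplus/0]_(i : 'I_n) \big[Rplus/0]_(w : Om)
   rr (j |: I) s i w ^ 2)) //.
rewrite -(tower0 I _ Pm) /Phi -sumR_sub.
apply: eq_bigr => t _; rewrite -Rmult_minus_distr_l; congr (_ * _).
rewrite Ex_sum -sumR_sub; apply: eq_bigr => i _.
by rewrite Ex_sum -sumR_sub.
Qed.

Lemma WW_le I : is_prob mu ->
  WW I <= \big[Rplus/0]_(j : 'I_n) (Phi (j |: I) - Phi I).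
Proof.
move=> Pm; rewrite /WW /SC.
rewrite (eq_bigr (fun t => \big[Rplus/0]_(j : 'I_n) (mu t * \big[Rplus/0]_(i : 'I_n)
   \big[Rplus/0]_(w : Om) CovN (cond I t) i j w ^ 2))); last by move=> t _; rewrite sumR_mulr.
rewrite exchange_big /=; apply: sumR_le => j _; exact: pot_step.
Qed.

Lemma Phi_bounds I : is_prob mu -> 0 <= Phi I <= INR n.
Proof.
move=> Pm; case: (Pm) => m0 m1.
have H : forall t, 0 <= mu t * \big[Rplus/0]_(i : 'I_n) \big[Rplus/0]_(w : Om) rr I t i w ^ 2
   <= mu t * INR n.
  move=> t; case: (Rle_lt_or_eq_dec _ _ (m0 t)) => [mt|<-]; last by rewrite !Rmult_0_l; lra.
  have Pn := cond_prob I Pm mt.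
  have S0 : 0 <= \big[Rplus/0]_(i : 'I_n) \big[Rplus/0]_(w : Om) rr I t i w ^ 2.
    by apply: sumR_ge0 => i _; apply: sumR_ge0 => w _; apply: pow2_ge_0.
  split; first by apply: Rmult_le_pos; lra.
  apply: Rmult_le_compat_l; first lra.
  rewrite (_ : INR n = \big[Rplus/0]_(i : 'I_n) 1); last by rewrite sumR_const card_ord Rmult_1_r.
  apply: sumR_le => i _.
  apply: Rle_trans (_ : \big[Rplus/0]_(w : Om) rr I t i w <= _).
    apply: sumR_le => w _; have := xm01 i w Pn; rewrite -/(rr I t i w) => h; nra.
  rewrite /rr /xm -Ex_sum (Ex_ext (fun _ => 1)); first by rewrite Ex_const //; lra.
  by move=> s; rewrite /gi sum_ind_eq.
split.
  by apply: sumR_ge0 => t _; case: (H t).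
apply: Rle_trans (_ : \big[Rplus/0]_(t : cfg) (mu t * INR n) <= _).
  by apply: sumR_le => t _; case: (H t).
by rewrite -sumR_mull m1; lra.
Qed.

End Cond.


Section Count.
Variable (n : nat).

Definition phiS (p : {set 'I_n} * 'I_n) : {set 'I_n} * 'I_n :=
  (if p.2 \in p.1 then p.1 :\ p.2 else p.2 |: p.1, p.2).

Lemma phiS_inv : involutive phiS.
Proof.
case=> A j; rewrite /phiS /=; case jA: (j \in A) => /=.
  by rewrite in_setD1 eqxx /= setD1K.
by rewrite setU11 setU1K ?jA.
Qed.

Lemma double_count (F : {set 'I_n} -> R) t :
  \big[Rplus/0]_(I : {set 'I_n} | #|I| == t) \big[Rplus/0]_(j | j \notin I) F (j |: I) =
  INR t.+1 * \big[Rplus/0]_(J : {set 'I_n} | #|J| == t.+1) F J.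
Proof.
rewrite sumR_mulr.
have -> : \big[Rplus/0]_(J : {set 'I_n} | #|J| == t.+1) (INR t.+1 * F J) =
   \big[Rplus/0]_(J : {set 'I_n} | #|J| == t.+1) \big[Rplus/0]_(j in J) F J.
  by apply: eq_bigr => J /eqP cJ; rewrite sumR_const cJ.
rewrite !pair_big_dep /=.
rewrite [RHS](reindex_inj (inv_inj phiS_inv)).
apply: eq_big => [[A j]|[A j]] /=.
  rewrite /phiS /=; case jA: (j \in A) => /=.
    by rewrite in_setD1 eqxx !andbF.
  by rewrite setU11 cardsU1 jA andbT.
by move=> /andP [_ jn]; rewrite /phiS /= (negbTE jn).
Qed.

End Count.

Section Avg.
Variables (Om : finType) (n : nat) (mu : config Om n -> R).

Definition Av t (F : {set 'I_n} -> R) :=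
  \big[Rplus/0]_(I : {set 'I_n} | #|I| == t) (/ INR 'C(n, t) * F I).
Definition Ap t := Av t (Phi mu).

Lemma INR_bin t : (t < n)%N ->
  INR t.+1 * INR 'C(n, t.+1) = (INR n - INR t) * INR 'C(n, t).
Proof.
move=> tn; have E := mul_bin_left n t.
have := f_equal INR E; rewrite !mult_INR minus_INR //.
by apply/leP; apply: ltnW.
Qed.

Lemma sum_notin_const (I : {set 'I_n}) c :
  \big[Rplus/0]_(j | j \notin I) c = (INR n - INR #|I|) * c.
Proof.
have := sumR_const [pred j : 'I_n | true] c.
rewrite (bigID (fun j => j \in I)) /= sumR_const.
have -> : #|[pred j : 'I_n | true]| = n by rewrite -[RHS]card_ord; apply: eq_card.
move=> h; rewrite Rmult_minus_distr_r -h /Rminus Rplus_comm -Rplus_assoc Rplus_opp_l Rplus_0_l.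
by [].
Qed.

Lemma WW_ge0 I : is_prob mu -> 0 <= WW mu I.
Proof.
case=> m0 _; apply: sumR_ge0 => t _; apply: Rmult_le_pos => //; apply: SC_ge0.
Qed.

Lemma av_step t : is_prob mu -> (t < n)%N ->
  Av t (WW mu) <= INR n * (Ap t.+1 - Ap t).
Proof.
move=> Pm tn.
have C0 : 0 < INR 'C(n, t) by apply: lt_0_INR; apply/ltP; rewrite bin_gt0 ltnW.
have C1 : 0 < INR 'C(n, t.+1) by apply: lt_0_INR; apply/ltP; rewrite bin_gt0.
set S1 := \big[Rplus/0]_(J : {set 'I_n} | #|J| == t.+1) Phi mu J.
set S0 := \big[Rplus/0]_(J : {set 'I_n} | #|J| == t) Phi mu J.
have key : \big[Rplus/0]_(I : {set 'I_n} | #|I| == t) WW mu I <=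
           INR t.+1 * S1 - (INR n - INR t) * S0.
  apply: Rle_trans (_ : \big[Rplus/0]_(I : {set 'I_n} | #|I| == t)
      (\big[Rplus/0]_(j | j \notin I) Phi mu (j |: I) - (INR n - INR t) * Phi mu I) <= _).
    apply: sumR_le => I /eqP cI; apply: Rle_trans (WW_le I Pm) _.
    rewrite (bigID (fun j => j \in I)) /= big1; last first.
      move=> j jI; have -> : j |: I = I.
        by apply/setP => x; rewrite in_setU1; case: eqP => // ->.
      ring.
    by rewrite Rplus_0_l sumR_sub sum_notin_const cI; apply: Rle_refl.
  by rewrite sumR_sub double_count -sumR_mulr; apply: Rle_refl.
have avW : Av t (WW mu) = / INR 'C(n, t) * \big[Rplus/0]_(I : {set 'I_n} | #|I| == t) WW mu I.
  by rewrite /Av sumR_mulr.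
have A1 : Ap t.+1 = / INR 'C(n, t.+1) * S1 by rewrite /Ap /Av sumR_mulr.
have A0 : Ap t = / INR 'C(n, t) * S0 by rewrite /Ap /Av sumR_mulr.
have Wge : 0 <= Av t (WW mu).
  by apply: sumR_ge0 => I _; apply: Rmult_le_pos;
    [apply: Rlt_le; apply: Rinv_0_lt_compat | apply: WW_ge0].
have tn' : INR t < INR n by apply: lt_INR; apply/ltP.
have t0 : 0 <= INR t by apply: pos_INR.
have Hb := INR_bin tn.
have step : Av t (WW mu) <= (INR n - INR t) * (Ap t.+1 - Ap t).
  rewrite avW A1 A0.
  have -> : (INR n - INR t) * (/ INR 'C(n, t.+1) * S1 - / INR 'C(n, t) * S0) =
            / INR 'C(n, t) * (INR t.+1 * S1 - (INR n - INR t) * S0).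
    have -> : INR n - INR t = INR t.+1 * INR 'C(n, t.+1) / INR 'C(n, t).
      by rewrite Hb; field; lra.
    field; lra.
  apply: Rmult_le_compat_l; last exact: key.
  by apply: Rlt_le; apply: Rinv_0_lt_compat.
have d0 : 0 <= Ap t.+1 - Ap t.
  case: (Rle_or_lt 0 (Ap t.+1 - Ap t)) => // h; nra.
nra.
Qed.

Lemma sum_size_const t c :
  \big[Rplus/0]_(I : {set 'I_n} | #|I| == t) c = INR 'C(n, t) * c.
Proof.
have := sumR_const [pred I : {set 'I_n} | #|I| == t] c.
have -> : #|[pred I : {set 'I_n} | #|I| == t]| = 'C(n, t).
  by rewrite -cardsE card_draws card_ord.
by move=> <-; apply: eq_bigl => I.
Qed.

Lemma Cinv_le1 t : INR 'C(n, t) * / INR 'C(n, t) <= 1.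
Proof.
case: (Req_dec (INR 'C(n, t)) 0) => [->|h]; first by rewrite Rmult_0_l; lra.
by rewrite Rinv_r //; lra.
Qed.

Lemma Ap_bounds t : is_prob mu -> 0 <= Ap t <= INR n.
Proof.
move=> Pm; have Ci : 0 <= / INR 'C(n, t).
  case: (Req_dec (INR 'C(n, t)) 0) => [->|h]; first by rewrite Rinv_0; lra.
  by apply: Rlt_le; apply: Rinv_0_lt_compat; have := pos_INR 'C(n, t); lra.
split.
  by apply: sumR_ge0 => I _; apply: Rmult_le_pos => //; case: (Phi_bounds I Pm).
apply: Rle_trans (_ : \big[Rplus/0]_(I : {set 'I_n} | #|I| == t) (/ INR 'C(n, t) * INR n)
   <= _).
  by apply: sumR_le => I _; apply: Rmult_le_compat_l => //; case: (Phi_bounds I Pm).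
rewrite sum_size_const -Rmult_assoc.
have n0 := pos_INR n; have := Cinv_le1 t; nra.
Qed.

Lemma tele T : is_prob mu -> (T < n)%N ->
  \big[Rplus/0]_(1%N <= t < T.+1) Av t (WW mu) <= INR n * (Ap T.+1 - Ap 1%N).
Proof.
move=> Pm; elim: T => [|T IH] Tn.
  by rewrite big_geq // Rminus_diag Rmult_0_r; lra.
rewrite big_nat_recr //=.
have := IH (ltnW Tn); have := av_step Pm Tn; lra.
Qed.

End Avg.


Section AvgI.
Variables (n N : nat) (theta : nat -> R).
Hypothesis th0 : forall t, 0 <= theta t.
Hypothesis th1 : \big[Rplus/0]_(t < N) theta t = 1.

Lemma Cinv_ge0 t : 0 <= / INR 'C(n, t).
Proof.
case: (Req_dec (INR 'C(n, t)) 0) => [->|h]; first by rewrite Rinv_0; lra.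
by apply: Rlt_le; apply: Rinv_0_lt_compat; have := pos_INR 'C(n, t); lra.
Qed.

Lemma avgI_le (F G : {set 'I_n} -> R) : (forall I, F I <= G I) ->
  avgI N theta F <= avgI N theta G.
Proof.
move=> FG; apply: sumR_le => t _; apply: Rmult_le_compat_l => //.
by apply: sumR_le => I _; apply: Rmult_le_compat_l => //; apply: Cinv_ge0.
Qed.

Lemma avgI_add (F G : {set 'I_n} -> R) :
  avgI N theta (fun I => F I + G I) = avgI N theta F + avgI N theta G.
Proof.
rewrite /avgI -big_split; apply: eq_bigr => t _ /=.
rewrite -Rmult_plus_distr_l -big_split; congr (_ * _); apply: eq_bigr => I _ /=.
by rewrite Rmult_plus_distr_l.
Qed.

Lemma avgI_scal c (F : {set 'I_n} -> R) :
  avgI N theta (fun I => c * F I) = c * avgI N theta F.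
Proof.
rewrite /avgI sumR_mulr; apply: eq_bigr => t _ /=.
have -> : \big[Rplus/0]_(I : {set 'I_n} | #|I| == t) (/ INR 'C(n, t) * (c * F I)) =
  c * \big[Rplus/0]_(I : {set 'I_n} | #|I| == t) (/ INR 'C(n, t) * F I).
  by rewrite sumR_mulr; apply: eq_bigr => I _; Rring.
set S := \big[Rplus/0]_(I : {set 'I_n} | #|I| == t) _; Rring.
Qed.

Lemma avgI_const c : 0 <= c -> avgI N theta (fun _ : {set 'I_n} => c) <= c.
Proof.
move=> c0; rewrite /avgI.
apply: Rle_trans (_ : \big[Rplus/0]_(t < N) (theta t * c) <= _); last first.
  by rewrite -sumR_mull th1; lra.
apply: sumR_le => t _; apply: Rmult_le_compat_l => //.
rewrite sum_size_const -Rmult_assoc; have := Cinv_le1 n t; nra.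
Qed.

Lemma avgI_sqrt (F : {set 'I_n} -> R) : (forall I, 0 <= F I) ->
  avgI N theta (fun I => sqrt (F I)) <= sqrt (avgI N theta F).
Proof.
move=> F0; rewrite /avgI.
apply: Rle_trans (_ : \big[Rplus/0]_(t < N) (theta t *
   sqrt (\big[Rplus/0]_(I : {set 'I_n} | #|I| == t) (/ INR 'C(n, t) * F I))) <= _).
  apply: sumR_le => t _; apply: Rmult_le_compat_l => //.
  apply: jensen_sqrt => // [I _|]; first exact: Cinv_ge0.
  by rewrite sum_size_const; apply: Cinv_le1.
apply: jensen_sqrt => // [t _|]; last by rewrite th1; lra.
by apply: sumR_ge0 => I _; apply: Rmult_le_pos => //; apply: Cinv_ge0.
Qed.

End AvgI.


Section Transfer.
Variables (Om : finType) (n : nat) (mu : config Om n -> R) (I : {set 'I_n}).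
Local Notation cfg := (config Om n).
Local Notation sig_t := {ffun {i : 'I_n | i \in I} -> Om}.

Definition restr (t : cfg) : sig_t := [ffun x => t (val x)].

Lemma cyl_restr (s : sig_t) t : cyl s t = (s == restr t).
Proof.
apply/forallP/eqP => [h|->].
  by apply/ffunP => x; rewrite ffunE (eqP (h x)).
by move=> x; rewrite ffunE.
Qed.

Lemma cyl_agree (s : sig_t) t u : cyl s t -> cyl s u = agree I u t.
Proof.
move=> /forallP ht; apply/forallP/forall_inP => [hu i iI|hu x].
  have := hu (exist _ i iI); have := ht (exist _ i iI) => /= /eqP -> /eqP -> //.
by rewrite -(eqP (ht x)); apply: hu; exact: (valP x).
Qed.

Lemma margI_Zc (s : sig_t) t : cyl s t -> margI mu s = Zc mu I t.
Proof.
move=> ct; rewrite /margI /Zc big_mkcond; apply: eq_bigr => u _.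
by rewrite (cyl_agree u ct) /ind; case: (agree I u t); Rring.
Qed.

Lemma condm_cond (s : sig_t) t : is_prob mu -> cyl s t -> 0 < mu t ->
  condm mu s = cond mu I t.
Proof.
move=> Pm ct mt; apply: functional_extensionality => u.
rewrite /condm (margI_Zc ct); case: (Rlt_dec 0 (Zc mu I t)) => [r|h]; last first.
  by exfalso; apply: h; apply: Zc_pos.
rewrite /cond (cyl_agree u ct) /Rdiv /=; Rring.
Qed.

Lemma transfer (G : (cfg -> R) -> R) : is_prob mu ->
  \big[Rplus/0]_(s : sig_t) (margI mu s * G (condm mu s)) =
  \big[Rplus/0]_(t : cfg) (mu t * G (cond mu I t)).
Proof.
move=> Pm; case: (Pm) => m0 _.
rewrite (eq_bigr (fun s => \big[Rplus/0]_(t : cfg) (ind (cyl s t) * (mu t * G (cond mu I t)))));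
  last first.
  move=> s _; rewrite /margI sumR_mull big_mkcond; apply: eq_bigr => t _.
  case ct: (cyl s t); last by rewrite /ind; Rring.
  case: (Rle_lt_or_eq_dec _ _ (m0 t)) => [mt|<-]; last by rewrite /ind; Rring.
  by rewrite (condm_cond Pm ct mt) /ind; Rring.
rewrite exchange_big /=; apply: eq_bigr => t _.
rewrite -sumR_mull (eq_bigr (fun s => ind (s == restr t))); last first.
  by move=> s _; rewrite cyl_restr.
rewrite (bigD1 (restr t)) //= big1 /ind ?eqxx; first by Rring.
by move=> s /negbTE ->.
Qed.

End Transfer.


Lemma Rinv_ge0' x : 0 <= x -> 0 <= / x.
Proof.
move=> x0; case: (Req_dec x 0) => [->|h]; first by rewrite Rinv_0; lra.
by apply: Rlt_le; apply: Rinv_0_lt_compat; lra.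
Qed.

Section Bounds.
Variables (Om : finType) (n : nat).
Local Notation cfg := (config Om n).

Definition c0 := sqrt (INR n) / INR n.

Lemma Dcut_single (nu : cfg -> R) : (0 < n)%N -> is_prob nu ->
  Dcut nu (prodm nu) <= Qm nu + c0.
Proof.
move=> n0 Pn; have Pp := prodm_prob Pn; case: (Pn) => nu0 nu1; case: (Pp) => p0 p1.
have np : 0 < INR n by apply: lt_0_INR; apply/ltP.
have cp : coupling nu (prodm nu) (fun p => nu p.1 * prodm nu p.2).
  split; first by move=> p; apply: Rmult_le_pos.
  split=> [s|t] /=; first by rewrite -sumR_mulr p1 Rmult_1_r.
  by rewrite -sumR_mull nu1 Rmult_1_l.
apply: Rle_trans (Dcut_le n0 cp) _.
have Q0 : 0 <= Qm nu by apply: sqrt_pos.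
have H : cut_val (fun p : cfg * cfg => nu p.1 * prodm nu p.2) <= INR n * Qm nu + sqrt (INR n).
  apply: cut_val_le.
  - by have := sqrt_pos (INR n); nra.
  - by move=> p; apply: Rmult_le_pos.
  - by move=> A w; apply: prod_coupling_bound.
apply: Rle_trans (_ : (INR n * Qm nu + sqrt (INR n)) / INR n <= _).
  by apply: Rmult_le_compat_r => //; apply: Rlt_le; apply: Rinv_0_lt_compat.
by rewrite /c0; apply: Req_le; field; lra.
Qed.

Variables (mu : cfg -> R) (I : {set 'I_n}).
Local Notation sig_t := {ffun {i : 'I_n | i \in I} -> Om}.

Lemma margI_ge0 (s : sig_t) : is_prob mu -> 0 <= margI mu s.
Proof. by case=> m0 _; apply: sumR_ge0. Qed.

Lemma condm_ge0 (s : sig_t) u : is_prob mu -> 0 <= condm mu s u.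
Proof.
move=> Pm; case: (Pm) => m0 _; rewrite /condm.
case: (Rlt_dec 0 (margI mu s)) => [h|h].
  apply: Rmult_le_pos; last by apply: Rlt_le; apply: Rinv_0_lt_compat.
  by apply: Rmult_le_pos => //; apply: ind_ge0.
apply: Rmult_le_pos; first exact: ind_ge0.
by apply: Rinv_ge0'; apply: sumR_ge0 => *; lra.
Qed.

Lemma condm_prob_pos (s : sig_t) : is_prob mu -> 0 < margI mu s -> is_prob (condm mu s).
Proof.
move=> Pm h; split=> [u|]; first exact: condm_ge0.
rewrite /condm; case: (Rlt_dec 0 (margI mu s)) => [r|//].
rewrite -sumR_mull.
have -> : \big[Rplus/0]_(u : cfg) (ind (cyl s u) * mu u) = margI mu s.
  by rewrite /margI [RHS]big_mkcond; apply: eq_bigr => u _; rewrite /ind;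
    case: (cyl s u); Rring.
by field; lra.
Qed.

Lemma bound_i : (0 < n)%N -> is_prob mu ->
  \big[Rplus/0]_(s : sig_t) (margI mu s * Dcut (condm mu s) (prodm (condm mu s))) <=
  \big[Rplus/0]_(t : cfg) (mu t * (Qm (cond mu I t) + c0)).
Proof.
move=> n0 Pm; case: (Pm) => m0 _.
rewrite (transfer I (fun nu => Dcut nu (prodm nu)) Pm).
apply: sumR_le => t _.
case: (Rle_lt_or_eq_dec _ _ (m0 t)) => [mt|<-]; last by rewrite !Rmult_0_l; lra.
apply: Rmult_le_compat_l; first lra.
by apply: Dcut_single => //; apply: cond_prob.
Qed.

Lemma mix_marg u : is_prob mu ->
  \big[Rplus/0]_(t : cfg) (mu t * cond mu I t u) = mu u.
Proof.
move=> Pm.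
have := tower0 I (fun v => ind (v == u)) Pm.
rewrite /Ex sum_ind_mul => <-; apply: eq_bigr => t _; congr (_ * _).
by rewrite sum_ind_mul.
Qed.

Lemma mprob (s : sig_t) (a : R) (P : is_prob (condm mu s) -> a = 1) :
  is_prob mu -> margI mu s * a = margI mu s.
Proof.
move=> Pm; case: (Rle_lt_or_eq_dec _ _ (margI_ge0 s Pm)) => [h|<-]; last by Rring.
by rewrite P ?Rmult_1_r //; apply: condm_prob_pos.
Qed.

Definition Gmix (p : cfg * cfg) : R :=
  \big[Rplus/0]_(s : sig_t) (margI mu s * (condm mu s p.1 * prodm (condm mu s) p.2)).

Lemma Gmix_coupling : is_prob mu -> coupling mu (barI mu I) Gmix.
Proof.
move=> Pm; split.
  move=> p; apply: sumR_ge0 => s _; apply: Rmult_le_pos; first exact: margI_ge0.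
  apply: Rmult_le_pos; first exact: condm_ge0.
  by apply: prodm_ge0 => v; apply: condm_ge0.
split=> [u|t].
- rewrite /Gmix exchange_big /= -(mix_marg u Pm) -(transfer I (fun nu => nu u) Pm).
  apply: eq_bigr => s _.
  rewrite (eq_bigr (fun t => margI mu s * condm mu s u * prodm (condm mu s) t));
    last by move=> t _; Rring.
  rewrite -sumR_mulr.
  case: (Rle_lt_or_eq_dec _ _ (margI_ge0 s Pm)) => [h|<-]; last by Rring.
  by case: (prodm_prob (condm_prob_pos Pm h)) => _ ->; rewrite Rmult_1_r.
- rewrite /Gmix exchange_big /barI; apply: eq_bigr => s _.
  have -> : \big[Rplus/0]_(u : cfg) (margI mu s * (condm mu s (u, t).1 *
       prodm (condm mu s) (u, t).2)) =
     margI mu s * prodm (condm mu s) t * \big[Rplus/0]_(u : cfg) condm mu s u.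
    by rewrite sumR_mulr; apply: eq_bigr => u _ /=; Rring.
  case: (Rle_lt_or_eq_dec _ _ (margI_ge0 s Pm)) => [h|<-]; last by Rring.
  by case: (condm_prob_pos Pm h) => _ ->; rewrite Rmult_1_r.
Qed.

Lemma bound_ii : (0 < n)%N -> is_prob mu ->
  Dcut mu (barI mu I) <= \big[Rplus/0]_(t : cfg) (mu t * (Qm (cond mu I t) + c0)).
Proof.
move=> n0 Pm; case: (Pm) => m0 m1.
have np : 0 < INR n by apply: lt_0_INR; apply/ltP.
apply: Rle_trans (Dcut_le n0 (Gmix_coupling Pm)) _.
set M := \big[Rplus/0]_(t : cfg) (mu t * (INR n * Qm (cond mu I t) + sqrt (INR n))).
have H : cut_val Gmix <= M.
  apply: cut_val_le.
  - apply: sumR_ge0 => t _; apply: Rmult_le_pos => //.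
    apply: Rplus_le_le_0_compat; last exact: sqrt_pos.
    by apply: Rmult_le_pos; [apply: pos_INR | apply: sqrt_pos].
  - move=> p; apply: sumR_ge0 => s _; apply: Rmult_le_pos; first exact: margI_ge0.
    apply: Rmult_le_pos; first exact: condm_ge0.
    by apply: prodm_ge0 => v; apply: condm_ge0.
  move=> A w; rewrite /M -(transfer I (fun nu => INR n * Qm nu + sqrt (INR n)) Pm).
  rewrite /Gmix (eq_bigr (fun p => \big[Rplus/0]_(s : sig_t) (margI mu s *
     (condm mu s p.1 * prodm (condm mu s) p.2 * Rabs (Xs A w p.1 - Xs A w p.2)))));
    last by move=> p _; rewrite sumR_mull; apply: eq_bigr => s _; Rring.
  rewrite exchange_big /=; apply: sumR_le => s _; rewrite -sumR_mulr.
  case: (Rle_lt_or_eq_dec _ _ (margI_ge0 s Pm)) => [h|<-]; last by rewrite !Rmult_0_l; lra.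
  apply: Rmult_le_compat_l; first lra.
  by apply: prod_coupling_bound => //; apply: condm_prob_pos.
apply: Rle_trans (_ : M / INR n <= _).
  by apply: Rmult_le_compat_r => //; apply: Rlt_le; apply: Rinv_0_lt_compat.
rewrite /M /Rdiv sumR_mull; apply: Req_le; apply: eq_bigr => t _.
by rewrite /c0; field; lra.
Qed.

End Bounds.


Section Final.
Variables (Om : finType) (n : nat) (mu : config Om n -> R).
Local Notation cfg := (config Om n).

Lemma BI_le I : (0 < n)%N -> is_prob mu ->
  \big[Rplus/0]_(t : cfg) (mu t * (Qm (cond mu I t) + c0 n)) <=
  sqrt (/ INR n * sqrt (WW mu I)) + c0 n.
Proof.
move=> n0 Pm; case: (Pm) => m0 m1.
have np : 0 < INR n by apply: lt_0_INR; apply/ltP.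
rewrite (eq_bigr (fun t => mu t * Qm (cond mu I t) + c0 n * mu t)); last first.
  by move=> t _; Rring.
rewrite big_split /= -sumR_mulr m1 Rmult_1_r; apply: Rplus_le_compat_r.
rewrite /Qm.
apply: Rle_trans.
  apply: (@jensen_sqrt _ _ predT mu (fun t => sqrt (SC (cond mu I t)) / INR n)) => //.
  - by move=> t _; apply: Rmult_le_pos; [apply: sqrt_pos| apply: Rinv_ge0'; lra].
  - by rewrite m1; lra.
apply: sqrt_le_1_alt.
rewrite (eq_bigr (fun t => / INR n * (mu t * sqrt (SC (cond mu I t))))); last first.
  by move=> t _; rewrite /Rdiv; Rring.
rewrite -sumR_mulr; apply: Rmult_le_compat_l; first by apply: Rinv_ge0'; lra.
apply: jensen_sqrt => //; first by move=> t _; apply: SC_ge0.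
by rewrite m1; lra.
Qed.

End Final.

Section Theta.
Variable (T : nat).
Definition thetaT (t : nat) : R := if (0 < t <= T)%N then / INR T else 0.

Lemma sum_nat_one : \big[Rplus/0]_(1%N <= t < T.+1) 1 = INR T.
Proof.
elim: T => [|k IH]; first by rewrite big_geq.
by rewrite big_nat_recr //= IH; case: k {IH} => [|k] /=; lra.
Qed.

Lemma sum_theta (F : nat -> R) :
  \big[Rplus/0]_(t < T.+1) (thetaT t * F t) = / INR T * \big[Rplus/0]_(1%N <= t < T.+1) F t.
Proof.
rewrite -(big_mkord xpredT (fun t => thetaT t * F t)) big_ltn // /thetaT /= Rmult_0_l Rplus_0_l.
rewrite sumR_mulr; apply: eq_big_nat => t /andP [t1 tT].
by rewrite t1 -ltnS tT.
Qed.

Lemma theta_sum1 : (0 < T)%N -> \big[Rplus/0]_(t < T.+1) thetaT t = 1.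
Proof.
move=> T0; have Tp : 0 < INR T by apply: lt_0_INR; apply/ltP.
have h := sum_theta (fun _ => 1); rewrite sum_nat_one in h.
transitivity (\big[Rplus/0]_(t < T.+1) (thetaT t * 1)).
  by apply: eq_bigr => t _; rewrite Rmult_1_r.
by rewrite h; field; lra.
Qed.

End Theta.

Section Main.
Variables (Om : finType) (n : nat) (mu : config Om n -> R) (T : nat).
Local Notation cfg := (config Om n).
Hypotheses (T0 : (0 < T)%N) (Tn : (T < n)%N) (Pm : is_prob mu).

Lemma avgWW : avgI T.+1 (thetaT T) (WW mu) <= / INR T * (INR n * INR n).
Proof.
have Tp : 0 < INR T by apply: lt_0_INR; apply/ltP.
have E : avgI T.+1 (thetaT T) (WW mu) =
   / INR T * \big[Rplus/0]_(1%N <= t < T.+1) Av t (WW mu) :=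
  sum_theta T (fun t => Av t (WW mu)).
rewrite E; apply: Rmult_le_compat_l; first by apply: Rinv_ge0'; lra.
apply: Rle_trans (tele Pm Tn) _.
have := Ap_bounds T.+1 Pm; have := Ap_bounds 1%N Pm; have := pos_INR n; nra.
Qed.

Lemma gen_bound (F : {set 'I_n} -> R) :
  (forall I, F I <= sqrt (/ INR n * sqrt (WW mu I)) + c0 n) ->
  avgI T.+1 (thetaT T) F <= sqrt (/ sqrt (INR T)) + c0 n.
Proof.
move=> FB.
have Tp : 0 < INR T by apply: lt_0_INR; apply/ltP.
have np : 0 < INR n by apply: lt_0_INR; apply/ltP; apply: leq_ltn_trans Tn.
have th0 : forall t, 0 <= thetaT T t.
  by move=> t; rewrite /thetaT; case: ifP => _; [apply: Rinv_ge0'; lra| lra].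
have th1 := theta_sum1 T0.
have c00 : 0 <= c0 n by rewrite /c0 /Rdiv; apply: Rmult_le_pos;
  [apply: sqrt_pos | apply: Rinv_ge0'; lra].
apply: Rle_trans (avgI_le T.+1 th0 FB) _.
rewrite avgI_add; apply: Rplus_le_compat; last exact: (avgI_const n th0 th1).
have W0 : forall I, 0 <= WW mu I by move=> I; apply: WW_ge0.
apply: Rle_trans (avgI_sqrt th0 th1 _) _.
  by move=> I; apply: Rmult_le_pos; [apply: Rinv_ge0'; lra | apply: sqrt_pos].
apply: sqrt_le_1_alt.
rewrite avgI_scal.
apply: Rle_trans (_ : / INR n * sqrt (avgI T.+1 (thetaT T) (WW mu)) <= _).
  apply: Rmult_le_compat_l; first by apply: Rinv_ge0'; lra.
  exact: avgI_sqrt.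
apply: Rle_trans (_ : / INR n * sqrt (/ INR T * (INR n * INR n)) <= _).
  apply: Rmult_le_compat_l; first by apply: Rinv_ge0'; lra.
  by apply: sqrt_le_1_alt; apply: avgWW.
rewrite sqrt_mult_alt; last by apply: Rinv_ge0'; lra.
rewrite sqrt_square; last lra.
rewrite sqrt_inv; apply: Req_le; field.
split; last lra.
by apply: Rgt_not_eq; apply: sqrt_lt_R0.
Qed.

Lemma main_i : expect_i T.+1 (thetaT T) mu <= sqrt (/ sqrt (INR T)) + c0 n.
Proof.
have n0 : (0 < n)%N by apply: leq_ltn_trans Tn.
apply: gen_bound => I; apply: Rle_trans (bound_i I n0 Pm) _; exact: BI_le.
Qed.

Lemma main_ii : expect_ii T.+1 (thetaT T) mu <= sqrt (/ sqrt (INR T)) + c0 n.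
Proof.
have n0 : (0 < n)%N by apply: leq_ltn_trans Tn.
apply: gen_bound => I; apply: Rle_trans (bound_ii I n0 Pm) _; exact: BI_le.
Qed.

End Main.

Unset Implicit Arguments.

Lemma nat_above K : 0 <= K -> exists T : nat, K < INR T <= K + 1.
Proof.
move=> K0; have [h1 h2] := archimed K.
have z0 : (0 <= up K)%Z.
  apply: le_IZR; lra.
exists (Z.to_nat (up K)); rewrite INR_IZR_INZ ZArith.Znat.Z2Nat.id //; lra.
Qed.

Lemma num1 a x : 0 < a -> 16 / a ^ 4 < x -> sqrt (/ sqrt x) < a / 2.
Proof.
move=> a0 hx.
have a4 : 0 < a ^ 4 by apply: pow_lt.
have q0 : 0 < 16 / a ^ 4 by apply: Rdiv_lt_0_compat; lra.
have e : sqrt (16 / a ^ 4) = 4 / a ^ 2.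
  rewrite -(sqrt_pow2 (4 / a ^ 2)); last by apply: Rlt_le; apply: Rdiv_lt_0_compat;
    [lra | apply: pow_lt].
  congr sqrt; field; lra.
have hs : 4 / a ^ 2 < sqrt x by rewrite -e; apply: sqrt_lt_1_alt; lra.
have a2 : 0 < a ^ 2 by apply: pow_lt.
have p0 : 0 < 4 / a ^ 2 by apply: Rdiv_lt_0_compat; lra.
have hi : / sqrt x < a ^ 2 / 4.
  have -> : a ^ 2 / 4 = / (4 / a ^ 2) by field; lra.
  by apply: Rinv_lt_contravar => //; apply: Rmult_lt_0_compat; lra.
have e2 : sqrt (a ^ 2 / 4) = a / 2.
  rewrite -(sqrt_pow2 (a / 2)); last lra.
  congr sqrt; field.
rewrite -e2; apply: sqrt_lt_1_alt; split => //.
by apply: Rlt_le; apply: Rinv_0_lt_compat; lra.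
Qed.

Lemma num2 a x : 0 < a -> 4 / a ^ 2 < x -> sqrt x / x < a / 2.
Proof.
move=> a0 hx.
have a2 : 0 < a ^ 2 by apply: pow_lt.
have p0 : 0 < 4 / a ^ 2 by apply: Rdiv_lt_0_compat; lra.
have x0 : 0 < x by lra.
have e : sqrt (4 / a ^ 2) = 2 / a.
  rewrite -(sqrt_pow2 (2 / a)); last by apply: Rlt_le; apply: Rdiv_lt_0_compat; lra.
  congr sqrt; field; lra.
have hs : 2 / a < sqrt x by rewrite -e; apply: sqrt_lt_1_alt; lra.
have sx : 0 < sqrt x by apply: sqrt_lt_R0.
have -> : sqrt x / x = / sqrt x.
  rewrite -{2}(sqrt_sqrt x); last lra.
  field; lra.
have -> : a / 2 = / (2 / a) by field; lra.
apply: Rinv_lt_contravar => //; apply: Rmult_lt_0_compat => //.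
by apply: Rdiv_lt_0_compat; lra.
Qed.

Lemma ln2_gt : 1 / 2 < ln 2.
Proof.
have e1 : exp (1 / 2) * exp (1 / 2) = exp 1 by rewrite -exp_plus; congr exp; field.
have e3 := exp_le_3; have p := exp_pos (1 / 2).
have lt2 : exp (1 / 2) < 2 by nra.
rewrite -[X in X < _](ln_exp (1 / 2)).
by apply: ln_increasing.
Qed.

Lemma num3 eps (Tr x : R) : 0 < eps < 1 / 2 -> 1 / eps <= x ->
  Tr <= 16 / eps ^ 4 + 1 -> Tr < x ^ 9.
Proof.
move=> [e0 e1] hx hT.
set y := 1 / eps in hx *.
have y2 : 2 < y by rewrite /y; apply: (Rmult_lt_reg_r eps) => //;
  rewrite /Rdiv Rmult_1_l Rinv_l; lra.
have y4 : 16 / eps ^ 4 = 16 * y ^ 4 by rewrite /y; field; lra.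
rewrite y4 in hT.
have hy : y ^ 9 <= x ^ 9 by apply: pow_incr; split; lra.
have z4 : 4 < y * y by nra.
have p4 : 16 < y ^ 4.
  have -> : y ^ 4 = (y * y) * (y * y) by ring.
  nra.
have e9 : y ^ 9 = y ^ 4 * ((y * y) * (y * y) * y) by ring.
have p5 : 32 < (y * y) * (y * y) * y by nra.
nra.
Qed.

Theorem theorem2p4 :
  exists c : R, 0 < c /\
  forall (Om : finType), (2 <= #|Om|)%N ->
  forall eps : R, 0 < eps < 1 / 2 ->
  exists n0 : nat, (0 < n0)%N /\
  exists (N : nat) (theta : nat -> R),
    (forall t, 0 <= theta t) /\
    (forall t, (N <= t)%N -> theta t = 0) /\
    \big[Rplus/0]_(t < N) theta t = 1 /\
    (forall t, theta t <> 0 ->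
       (0 < t)%N /\ INR t < Rpower (2 * ln (INR #|Om|) / eps) c) /\
    forall n : nat, (n0 < n)%N ->
    forall mu : config Om n -> R, is_prob mu ->
      (forall t, theta t <> 0 -> (t <= n)%N) /\
      expect_i N theta mu < eps /\
      expect_ii N theta mu < eps.
Proof.
exists (INR 9); split; first by apply: lt_0_INR; apply/ltP.
move=> Om HOm eps [e0 e1].
have e4 : 0 < eps ^ 4 by apply: pow_lt.
have e2 : 0 < eps ^ 2 by apply: pow_lt.
have k1 : 0 < 16 / eps ^ 4 by apply: Rdiv_lt_0_compat; lra.
have k2 : 0 < 4 / eps ^ 2 by apply: Rdiv_lt_0_compat; lra.
have [T [T1 T2]] := nat_above (16 / eps ^ 4) (Rlt_le _ _ k1).
have [n1 [n11 _]] := nat_above (4 / eps ^ 2) (Rlt_le _ _ k2).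
have Tp : 0 < INR T by lra.
have T0 : (0 < T)%N by apply/ltP; apply: INR_lt; rewrite /=; lra.
exists (maxn T n1); split; first by rewrite leq_max T0.
exists T.+1, (thetaT T).
split.
  by move=> t; rewrite /thetaT; case: ifP => _; [apply: Rinv_ge0'; lra| lra].
split.
  move=> t Nt; rewrite /thetaT ifF //; apply/negbTE; rewrite negb_and; apply/orP; right.
  by rewrite -ltnNge.
split; first exact: theta_sum1.
split.
  move=> t; rewrite /thetaT; case: ifP => [/andP [t0 tT] _|_ h]; last by exfalso; apply: h.
  split => //.
  have lnO : 1 / 2 < ln (INR #|Om|).
    apply: Rlt_le_trans ln2_gt _.
    have h2 : 2 <= INR #|Om| by have := le_INR 2 #|Om| (elimT leP HOm); rewrite /=; lra.
    case: (Rle_lt_or_eq_dec _ _ h2) => [h|<-]; last lra.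
    by apply: Rlt_le; apply: ln_increasing => //; lra.
  set x := 2 * ln (INR #|Om|) / eps.
  have hx : 1 / eps <= x.
    rewrite /x /Rdiv; apply: Rmult_le_compat_r; first by apply: Rlt_le; apply: Rinv_0_lt_compat.
    lra.
  have ie : 0 < 1 / eps by apply: Rdiv_lt_0_compat; lra.
  have x0 : 0 < x by lra.
  rewrite Rpower_pow //.
  apply: Rle_lt_trans (le_INR _ _ (elimT leP tT)) _.
  exact: (num3 eps (INR T) x (conj e0 e1) hx T2).
move=> n nn0 mu Pm.
have Tn : (T < n)%N := leq_ltn_trans (leq_maxl T n1) nn0.
have n1n : (n1 < n)%N := leq_ltn_trans (leq_maxr T n1) nn0.
have hn : 4 / eps ^ 2 < INR n.
  by apply: Rlt_trans n11 _; apply: lt_INR; apply/ltP.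
have b1 := num1 eps (INR T) e0 T1.
have b2 := num2 eps (INR n) e0 hn.
split.
  move=> t; rewrite /thetaT; case: ifP => [/andP [_ tT] _|_ h]; last by exfalso; apply: h.
  by apply: leq_trans tT (ltnW Tn).
split.
  apply: Rle_lt_trans (main_i T0 Tn Pm) _; rewrite /c0; lra.
apply: Rle_lt_trans (main_ii T0 Tn Pm) _; rewrite /c0; lra.
Qed.
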